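(* Let $A\in\mathcal A$ and $\Gamma(A)=\{\gamma\in\Gamma: g^*(e_1+\varepsilon\gamma)=A(e_1+\varepsilon\gamma)\text{ for all small }\varepsilon>0\}$. Suppose $\mathcal G^{(r+1)}$ is connected, and for edges $j,k\in\mathcal E^{(r+1)}$ the matrix $Q^{(r+1)}(A-I)$ is skew-symmetric, i.e. $\big(Q^{(r+1)}(A-I)\big)^T=-Q^{(r+1)}(A-I)$. Then $\psi^{(r+1)}_j(d)=\psi^{(r+1)}_k(d)$ with $d=e_1+\varepsilon\gamma$ for all $\gamma\in\Gamma(A)$ and all $\varepsilon\ge0$ sufficiently small.
   Context: $\mathcal G$ is a simple connected oriented graph with nodes $\{1,\dots,n\}$, $m$ edges, incidence matrix $C$, PTDF matrix $V=C(C^TC)^+$; $e$ all-ones, $J=ee^T$; $\lambda\in(0,1)$, $\lambda^*\ge\lambda$. $\Gamma=\{\gamma\in\mathbb R^n:\gamma_1=0,\gamma\ge0,e^T\gamma=1\}$. $g^*(d)$ is the DC-OPF optimal generation (unique minimizer of $\frac12\sum g_i^2$ over $g\ge0$ with $e^Tg=e^Td$, $-\lambda|Vd|\le V(d-g)\le\lambda|Vd|$). $\mathcal A=\{A_I:I\subseteq\{0,\dots,2m\}\}$ where, with $I_1=I\cap\{1,\dots,m\}$, $I_2=I\cap\{m+1,\dots,2m\}$, $V_{I_1}$ the rows $j\in I_1$ of $V$ and $V_{I_2}$ the rows $k-m$, $k\in I_2$: $A_I=\frac1nJ+[V_{I_1}^T\ V_{I_2}^T]\big([V_{I_1};V_{I_2}][V_{I_1}^T\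 V_{I_2}^T]\big)^+[(1-\lambda)V_{I_1};(1+\lambda)V_{I_2}]$. In the cascade, after $r$ edge failures the graph is $\mathcal G^{(r+1)}$ with surviving edges $\mathcal E^{(r+1)}$ and PTDF matrix $V^{(r+1)}$; if it is connected then $d^{(r+1)}=d$, $g^{(r+1)}=g^*(d)$; flows $f^{(r+1)}=V^{(r+1)}(d-g^*(d))$, emergency limits $F=\lambda^*Vd$, relative exceedances $\psi^{(r+1)}_i=|f^{(r+1)}_i|/F_i$. With $v_l=e_l^TV$, $v_l^{(r+1)}=e_l^TV^{(r+1)}$: $Q^{(r+1)}=v_j^Tv_k^{(r+1)}-v_k^Tv_j^{(r+1)}$ if $f^{(r+1)}_kf^{(r+1)}_j\ge0$ and $Q^{(r+1)}=v_j^Tv_k^{(r+1)}+v_k^Tv_j^{(r+1)}$ otherwise. *)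

(* Defs.v *)
From HB Require Import structures.
From mathcomp Require Import all_boot all_order all_algebra.
From mathcomp Require Import boolp reals.
Set Implicit Arguments. Unset Strict Implicit. Unset Printing Implicit Defensive.
Import Order.TTheory GRing.Theory Num.Theory.
Local Open Scope ring_scope.

Section PowerGrid.
Variable R : realType.

Definition is_pinv p q (M : 'M[R]_(p, q)) (X : 'M[R]_(q, p)) : Prop :=
  [/\ M *m X *m M = M, X *m M *m X = X,
      (M *m X)^T = M *m X & (X *m M)^T = X *m M].

Definition pinv p q (M : 'M[R]_(p, q)) : 'M[R]_(q, p) :=
  match pselect (exists X, is_pinv M X) with
  | left H => projT1 (cid H)
  | right _ => 0
  end.

Variables (n m : nat) (src dst : 'I_m -> 'I_n).

Definition simple_graph : Prop :=
  (forall e, src e != dst e) /\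
  (forall e e', e != e' ->
     ~ ((src e = src e' /\ dst e = dst e') \/ (src e = dst e' /\ dst e = src e'))).

Definition adj (E : {set 'I_m}) : rel 'I_n :=
  fun x y => [exists e in E, ((src e == x) && (dst e == y)) || ((src e == y) && (dst e == x))].

Definition connected_on (E : {set 'I_m}) : Prop := forall x y, connect (adj E) x y.

Definition incidence : 'M[R]_(m, n) :=
  \matrix_(e, i) ((i == src e)%:R - (i == dst e)%:R).

Definition incidence_on (E : {set 'I_m}) : 'M[R]_(m, n) :=
  \matrix_(e, i) (if e \in E then incidence e i else 0).

Definition ptdf_of (C : 'M[R]_(m, n)) : 'M[R]_(m, n) := C *m pinv (C^T *m C).

Definition PTDF : 'M[R]_(m, n) := ptdf_of incidence.
Definition PTDF_on (E : {set 'I_m}) : 'M[R]_(m, n) := ptdf_of (incidence_on E).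

Definition sumv (x : 'cV[R]_n) : R := \sum_i x i 0.
Definition cost (g : 'cV[R]_n) : R := 2^-1 * \sum_i (g i 0) ^+ 2.

Definition opf_feasible (lam : R) (d g : 'cV[R]_n) : Prop :=
  (forall i, 0 <= g i 0) /\ sumv g = sumv d /\
  (forall e, - (lam * `|(PTDF *m d) e 0|) <= (PTDF *m (d - g)) e 0
             <= lam * `|(PTDF *m d) e 0|).

Definition opf_optimal (lam : R) (d g : 'cV[R]_n) : Prop :=
  opf_feasible lam d g /\ forall h, opf_feasible lam d h -> cost g <= cost h.

(* g^*(d): the (unique) minimizer, chosen classically (0 if none exists) *)
Definition gstar (lam : R) (d : 'cV[R]_n) : 'cV[R]_n :=
  match pselect (exists g, opf_optimal lam d g) with
  | left H => projT1 (cid H)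
  | right _ => 0
  end.

(* I1 = I ∩ {1..m}, I2 = {k - m : k ∈ I ∩ {m+1..2m}}, both as subsets of edges 'I_m *)
Definition subrows (I : {set 'I_m}) (M : 'M[R]_(m, n)) : 'M[R]_(#|I|, n) :=
  rowsub (fun i : 'I_#|I| => enum_val i) M.

Definition Amat (lam : R) (I1 I2 : {set 'I_m}) : 'M[R]_n :=
  let W := col_mx (subrows I1 PTDF) (subrows I2 PTDF) in
  let W' := col_mx ((1 - lam) *: subrows I1 PTDF) ((1 + lam) *: subrows I2 PTDF) in
  (n%:R)^-1 *: const_mx 1 + W^T *m pinv (W *m W^T) *m W'.

Definition unitv (i : 'I_n) : 'cV[R]_n := delta_mx i 0.

Definition in_Gamma (node1 : 'I_n) (gam : 'cV[R]_n) : Prop :=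
  gam node1 0 = 0 /\ (forall i, 0 <= gam i 0) /\ sumv gam = 1.

Definition in_GammaA (lam : R) (node1 : 'I_n) (A : 'M[R]_n) (gam : 'cV[R]_n) : Prop :=
  in_Gamma node1 gam /\
  exists eps0 : R, 0 < eps0 /\
    forall eps : R, 0 < eps < eps0 ->
      gstar lam (unitv node1 + eps *: gam) = A *m (unitv node1 + eps *: gam).

Definition flow (lam : R) (E' : {set 'I_m}) (d : 'cV[R]_n) : 'cV[R]_m :=
  PTDF_on E' *m (d - gstar lam d).

Definition limits (lamstar : R) (d : 'cV[R]_n) : 'cV[R]_m := lamstar *: (PTDF *m d).

Definition psi (lam lamstar : R) (E' : {set 'I_m}) (d : 'cV[R]_n) (i : 'I_m) : R :=
  `|flow lam E' d i 0| / limits lamstar d i 0.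

Definition Qmat (lam : R) (E' : {set 'I_m}) (d : 'cV[R]_n) (j k : 'I_m) : 'M[R]_n :=
  let vj := row j PTDF in let vk := row k PTDF in
  let vj' := row j (PTDF_on E') in let vk' := row k (PTDF_on E') in
  let f := flow lam E' d in
  if 0 <= f k 0 * f j 0 then vj^T *m vk' - vk^T *m vj'
  else vj^T *m vk' + vk^T *m vj'.

End PowerGrid.

(* Main.v *)
Require Import Defs.
From HB Require Import structures.
From mathcomp Require Import all_boot all_order all_algebra.
From mathcomp Require Import boolp reals.
From mathcomp Require classical_sets topology normedtype derive.
From mathcomp Require Import lra ring.
Import Order.TTheory GRing.Theory Num.Theory.
Local Open Scope ring_scope.

Module Helpers.
Import classical_sets topology normedtype derive.
Import numFieldNormedType.Exports.
Local Open Scope classical_set_scope.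

Section Ex.
Variable R : realType.
Variables (n m : nat) (src dst : 'I_m -> 'I_n).

Lemma cont_sum (T : topologicalType) (F : 'I_n -> T -> R) :
  (forall i, continuous (F i)) -> continuous (fun v => \sum_i F i v).
Proof.
move=> Fc x.
apply: (@cvg_big R _ +%R 0 xpredT add_continuous T (nbhs x) (index_enum _) F).
by move=> i _; apply: Fc.
Qed.

Lemma cont_aff (c a : 'I_n -> R) :
  continuous (fun v : 'rV[R]_n => \sum_i c i * (a i - v ord0 i)).
Proof.
apply: cont_sum => i x.
apply: (continuousM (s:=fun=> c i) (t:=fun v : 'rV[R]_n => a i - v ord0 i)).
  exact: cst_continuous.
apply: (continuousB (f:=fun=> a i) (g:=fun v : 'rV[R]_n => v ord0 i)).
  exact: cst_continuous.
exact: coord_continuous.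
Qed.

Lemma closed_pre (f : 'rV[R]_n -> R) (D : set R) :
  continuous f -> closed D -> closed (f @^-1` D).
Proof. by move=> fc Dc; apply: preimage_closed => // x _; apply: fc. Qed.

Lemma feas_closed (lam : R) (d : 'cV[R]_n) :
  closed [set v : 'rV[R]_n | opf_feasible src dst lam d v^T].
Proof.
set P := PTDF R src dst.
have -> : [set v : 'rV[R]_n | opf_feasible src dst lam d v^T] =
  (\bigcap_(i in setT) ((fun v : 'rV[R]_n => \sum_j ((j == i)%:R * (0 - v ord0 j)))
        @^-1` [set x | x <= 0]))
  `&` (((fun v : 'rV[R]_n => \sum_j (1 * (0 - v ord0 j))) @^-1` [set x | x = - sumv d])
  `&` ((\bigcap_(e in setT) ((fun v : 'rV[R]_n => \sum_j P e j * (d j 0 - v ord0 j))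
        @^-1` [set x | - (lam * `|(P *m d) e 0|) <= x]))
   `&` (\bigcap_(e in setT) ((fun v : 'rV[R]_n => \sum_j P e j * (d j 0 - v ord0 j))
        @^-1` [set x | x <= lam * `|(P *m d) e 0|])))).
  have E1 (v : 'rV[R]_n) (i : 'I_n) : \sum_j ((j == i)%:R * (0 - v ord0 j)) = - v ord0 i.
    rewrite (bigD1 i) //= eqxx mul1r sub0r big1 ?addr0 // => j /negbTE ->.
    by rewrite mul0r.
  have E2 (v : 'rV[R]_n) : \sum_j (1 * (0 - v ord0 j)) = - sumv v^T.
    by rewrite /sumv -sumrN; apply: eq_bigr => j _; rewrite mul1r sub0r mxE.
  have E3 (v : 'rV[R]_n) (e : 'I_m) : \sum_j P e j * (d j 0 - v ord0 j) = (P *m (d - v^T)) e 0.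
    by rewrite mxE; apply: eq_bigr => j _; rewrite !mxE.
  apply/seteqP; split => v /=.
    move=> [h1 [h2 h3]]; split.
      by move=> i _; rewrite /= E1 oppr_le0; move: (h1 i); rewrite mxE.
    split; first by rewrite E2 h2.
    by split => e _ /=; rewrite E3; case/andP: (h3 e).
  move=> [h1 [h2 [h3 h4]]]; split.
    by move=> i; rewrite mxE -oppr_le0 -E1; apply: h1.
  split; first by apply: oppr_inj; rewrite -E2.
  by move=> e; rewrite -E3; apply/andP; split; [apply: h3|apply: h4].
apply: closedI.
  apply: closed_bigI => i _; apply: closed_pre; [exact: cont_aff | exact: closed_le].
apply: closedI.
  apply: closed_pre; [exact: cont_aff | exact: closed_eq].
apply: closedI.
  apply: closed_bigI => i _; apply: closed_pre; [exact: cont_aff | exact: closed_ge].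
apply: closed_bigI => i _; apply: closed_pre; [exact: cont_aff | exact: closed_le].
Qed.


Lemma cost_cont : continuous (fun v : 'rV[R]_n => cost v^T).
Proof.
have -> : (fun v : 'rV[R]_n => cost v^T) =
   (fun v => 2^-1 * \sum_i (v ord0 i * v ord0 i)).
  by apply: funext => v; rewrite /cost; congr (_ * _); apply: eq_bigr => i _; rewrite mxE expr2.
move=> x.
apply: (continuousM (s:=fun=> 2^-1) (t:=fun v : 'rV[R]_n => \sum_i (v ord0 i * v ord0 i))).
  exact: cst_continuous.
apply: (@cont_sum _ (fun i (v : 'rV[R]_n) => v ord0 i * v ord0 i)) => i y.
apply: (continuousM (s:=fun v : 'rV[R]_n => v ord0 i) (t:=fun v : 'rV[R]_n => v ord0 i)).
  exact: coord_continuous.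
exact: coord_continuous.
Qed.

Lemma sum_ge_term (v : 'cV[R]_n) i : (forall j, 0 <= v j 0) -> v i 0 <= sumv v.
Proof.
move=> h; rewrite /sumv (bigD1 i) //= lerDl; apply: sumr_ge0 => j _; exact: h.
Qed.

Lemma opt_exists (lam : R) (d : 'cV[R]_n) : 0 <= lam -> (forall i, 0 <= d i 0) ->
  exists g, opf_optimal src dst lam d g.
Proof.
move=> hlam hd.
set K := [set v : 'rV[R]_n | opf_feasible src dst lam d v^T].
have K0 : K !=set0.
  exists d^T; rewrite /K /= trmxK; split => //; split => // e.
  rewrite subrr mulmx0 !mxE; apply/andP; split; [rewrite oppr_le0|]; exact: mulr_ge0.
have Kc : compact K.
  apply: (subclosed_compact (feas_closed lam d)
     (rV_compact (A := fun=> `[0, sumv d]) (fun=> @segment_compact R 0 (sumv d)))).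
  move=> v [h1 [h2 h3]] i /=; rewrite in_itv /=.
  have := h1 i; rewrite mxE => ->; rewrite -h2 /=.
  have := @sum_ge_term v^T i h1; rewrite mxE; exact.
have [c cK cmin] := compact_EVT_min K0 Kc (continuous_subspaceT (A:=K) cost_cont).
exists c^T; split; first by move: cK; rewrite inE.
move=> h hh; have := cmin h^T; rewrite trmxK; apply.
by rewrite inE /K /= trmxK.
Qed.


Lemma sumvD (a b : R) (x y : 'cV[R]_n) : sumv (a *: x + b *: y) = a * sumv x + b * sumv y.
Proof.
rewrite /sumv !mulr_sumr -big_split /=; apply: eq_bigr => i _; by rewrite !mxE.
Qed.

Lemma opt_unique (lam : R) (d g1 g2 : 'cV[R]_n) :
  opf_optimal src dst lam d g1 -> opf_optimal src dst lam d g2 -> g1 = g2.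
Proof.
move=> [[a1 [b1 c1]] o1] [[a2 [b2 c2]] o2].
set h := 2^-1 *: g1 + 2^-1 *: g2.
have hf : opf_feasible src dst lam d h.
  split; first by move=> i; rewrite !mxE; have := a1 i; have := a2 i; lra.
  split; first by rewrite /h sumvD b1 b2; lra.
  move=> e.
  have -> : (PTDF R src dst *m (d - h)) e 0 =
     2^-1 * (PTDF R src dst *m (d - g1)) e 0 + 2^-1 * (PTDF R src dst *m (d - g2)) e 0.
    rewrite /h; move: (PTDF R src dst) => P; rewrite !mxE !mulr_sumr -big_split /=; apply: eq_bigr => i _; rewrite !mxE; by field.
  have := c1 e; have := c2 e; move=> /andP[u1 u2] /andP[u3 u4].
  apply/andP; split; lra.
have f1 : opf_feasible src dst lam d g1 by split.
have f2 : opf_feasible src dst lam d g2 by split.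
have k1 := o1 h hf; have k2 := o1 g2 f2; have k3 := o2 g1 f1.
have key : 2^-1 * cost g1 + 2^-1 * cost g2 - cost h =
    \sum_i 8^-1 * (g1 i 0 - g2 i 0) ^+ 2.
  rewrite /cost /h !mulrA !mulr_sumr -big_split -sumrB /=.
  by apply: eq_bigr => i _; rewrite !mxE; field.
have S0 : \sum_i 8^-1 * (g1 i 0 - g2 i 0) ^+ 2 = 0.
  apply/le_anti/andP; split; first by rewrite -key; lra.
  by apply: sumr_ge0 => i _; apply: mulr_ge0; [lra| exact: sqr_ge0].
apply/matrixP => i j; rewrite ord1.
have nn : forall i : 'I_n, xpredT i -> 0 <= 8^-1 * (g1 i 0 - g2 i 0) ^+ 2.
  by move=> k _; apply: mulr_ge0; [lra| exact: sqr_ge0].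
have /eqP := psumr_eq0P nn S0 isT (i := i).
rewrite mulf_eq0 invr_eq0 pnatr_eq0 /= expf_eq0 /= subr_eq0 => /eqP.
by [].
Qed.


Lemma lim0 (e0 u w : R) : 0 < e0 ->
  (forall eps, 0 < eps < e0 -> u <= eps * w) -> u <= 0.
Proof.
move=> he h; rewrite leNgt; apply/negP => up.
set c := `|w| + 1.
have cp : 0 < c by rewrite /c; have := normr_ge0 w; lra.
set t := Num.min (e0 / 2) (u / (2 * c)).
have t1 : t <= e0 / 2 by rewrite /t ge_min lexx.
have t2 : t <= u / (2 * c) by rewrite /t ge_min lexx orbT.
have tp : 0 < t by rewrite /t lt_min; apply/andP; split; [lra| apply: divr_gt0; lra].
have tc : t * c <= u / 2.
  rewrite -ler_pdivlMr //; apply: (le_trans t2); rewrite invfM mulrA mulrAC; lra.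
have := h t; rewrite tp /=; have -> : t < e0 by lra.
move=> /(_ isT) htw.
have : t * w <= t * c.
  rewrite ler_pM2l //; rewrite /c; have := ler_norm w; lra.
lra.
Qed.

Lemma lin_eq (e0 u w u' w' : R) : 0 < e0 ->
  (forall eps, 0 < eps < e0 -> u + eps * w = u' + eps * w') -> u = u'.
Proof.
move=> he h.
have h1 := h (e0 / 2); have h2 := h (e0 / 4).
have := h1 ltac:(apply/andP; split; lra); have := h2 ltac:(apply/andP; split; lra).
move=> k2 k1.
have : e0 / 4 * (w - w') = 0 by lra.
move/eqP; rewrite mulf_eq0 => /orP [/eqP|/eqP hw]; first by lra.
by nra.
Qed.

Lemma sumvD2 (x y : 'cV[R]_n) : sumv (x + y) = sumv x + sumv y.
Proof. by rewrite /sumv -big_split; apply: eq_bigr => i _; rewrite mxE. Qed.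
Lemma sumvZ (c : R) (x : 'cV[R]_n) : sumv (c *: x) = c * sumv x.
Proof. by rewrite /sumv mulr_sumr; apply: eq_bigr => i _; rewrite mxE. Qed.
Lemma sumvN (x : 'cV[R]_n) : sumv (- x) = - sumv x.
Proof. by rewrite /sumv -sumrN; apply: eq_bigr => i _; rewrite mxE. Qed.

Lemma cost_ge0 (x : 'cV[R]_n) : 0 <= cost x.
Proof. rewrite /cost; apply: mulr_ge0; [lra|]; apply: sumr_ge0 => i _; exact: sqr_ge0. Qed.

Lemma costDZ (x y : 'cV[R]_n) (c : R) :
  cost (x + c *: y) = cost x + c * (\sum_i x i 0 * y i 0) + c * c * cost y.
Proof.
rewrite /cost !mulr_sumr -!big_split /=; apply: eq_bigr => i _; rewrite !mxE; by field.
Qed.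

Lemma PE (P : 'M[R]_(m, n)) (X Y : 'cV[R]_n) (c : R) e :
  (P *m (X + c *: Y)) e 0 = (P *m X) e 0 + c * (P *m Y) e 0.
Proof. rewrite mulmxDr -scalemxAr; move: (P *m X) (P *m Y) => U W; by rewrite !mxE. Qed.

Lemma PZ (P : 'M[R]_(m, n)) (X : 'cV[R]_n) (c : R) e :
  (P *m (c *: X)) e 0 = c * (P *m X) e 0.
Proof. rewrite -scalemxAr; move: (P *m X) => U; by rewrite !mxE. Qed.

Lemma Hdiff (x y u v : 'cV[R]_n) (c : R) :
  (x + c *: y) - (u + c *: v) = (x - u) + c *: (y - v).
Proof. by apply/matrixP => i j; rewrite !mxE; ring. Qed.

Lemma opt_limit (lam e0 : R) (e1 gam a b : 'cV[R]_n) :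
  0 <= lam -> 0 < e0 -> (forall i, 0 <= e1 i 0) -> (forall i, 0 <= gam i 0) ->
  (forall eps, 0 < eps < e0 ->
     opf_optimal src dst lam (e1 + eps *: gam) (a + eps *: b)) ->
  opf_optimal src dst lam e1 a.
Proof.
move=> hlam he he1 hg hopt.
set P := PTDF R src dst.
have fa : opf_feasible src dst lam e1 a.
  split.
    move=> i; rewrite -oppr_le0; apply: (@lim0 e0 _ (b i 0) he) => eps heps.
    have [[h1 _] _] := hopt eps heps; have := h1 i; rewrite !mxE; lra.
  split.
    apply: (@lin_eq e0 _ (sumv b) _ (sumv gam) he) => eps heps.
    have [[_ [h2 _]] _] := hopt eps heps; move: h2; by rewrite !sumvD2 !sumvZ.
  move=> e.
  have tri : forall eps, 0 < eps -> `|(P *m e1) e 0 + eps * (P *m gam) e 0| <=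
       `|(P *m e1) e 0| + eps * `|(P *m gam) e 0|.
    move=> eps ep; apply: (le_trans (ler_normD _ _)); by rewrite normrM gtr0_norm.
  apply/andP; split.
    rewrite -subr_le0.
    apply: (@lim0 e0 _ ((P *m (gam - b)) e 0 + lam * `|(P *m gam) e 0|) he) => eps heps.
    have ep : 0 < eps by case/andP: heps.
    have [[_ [_ h3]] _] := hopt eps heps; have := h3 e.
    rewrite Hdiff !PE => /andP[u1 u2].
    have := ler_wpM2l hlam (tri eps ep). nra.
  rewrite -subr_le0.
  apply: (@lim0 e0 _ (lam * `|(P *m gam) e 0| - (P *m (gam - b)) e 0) he) => eps heps.
  have ep : 0 < eps by case/andP: heps.
  have [[_ [_ h3]] _] := hopt eps heps; have := h3 e.
  rewrite Hdiff !PE => /andP[u1 u2].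
  have := ler_wpM2l hlam (tri eps ep). nra.
split => // h [hh1 [hh2 hh3]].
set K := \sum_e `|(P *m gam) e 0| / `|(P *m e1) e 0|.
have K0 : 0 <= K by apply: sumr_ge0 => e _; apply: divr_ge0.
have Kq : forall e, (P *m e1) e 0 != 0 ->
    `|(P *m gam) e 0| <= K * `|(P *m e1) e 0|.
  move=> e nz; rewrite -ler_pdivrMr ?normr_gt0 //.
  by rewrite /K (bigD1 e) //= lerDl; apply: sumr_ge0 => e' _; apply: divr_ge0.
set w := K *: (e1 - h) + gam.
set e0' := Num.min e0 (K + 1)^-1.
have e0p : 0 < e0' by rewrite /e0' lt_min he /= invr_gt0; lra.
rewrite -subr_le0.
apply: (@lim0 e0' _ (\sum_i h i 0 * w i 0 - \sum_i a i 0 * b i 0 + e0 * cost w) e0p).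
move=> eps /andP[ep epe].
have epe0 : eps < e0 by move: epe; rewrite /e0' lt_min => /andP[].
have epK : eps * K < 1.
  have : eps < (K + 1)^-1 by move: epe; rewrite /e0' lt_min => /andP[].
  move=> H.
  have : eps * (K + 1) < 1.
    rewrite -ltr_pdivlMr; last lra.
    by rewrite div1r.
  nra.
have tK : 0 <= eps * K by apply: mulr_ge0; lra.
have hf : opf_feasible src dst lam (e1 + eps *: gam) (h + eps *: w).
  split.
    move=> i; rewrite /w !mxE.
    have := hh1 i; have := he1 i; have := hg i.
    have := mulr_ge0 (x := 1 - eps * K) (y := h i 0) ltac:(lra) (hh1 i).
    have := mulr_ge0 tK (he1 i).
    have := mulr_ge0 (ltW ep) (hg i).
    nra.
  split.
    rewrite /w !sumvD2 !sumvZ sumvD2 sumvZ sumvD2 sumvN hh2; ring.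
  move=> ee.
  have -> : (e1 + eps *: gam) - (h + eps *: w) = (1 - eps * K) *: (e1 - h).
    by apply/matrixP => i j; rewrite /w !mxE; ring.
  rewrite PZ PE.
  have := hh3 ee => /andP[u1 u2].
  have [p0|pn] := eqVneq ((P *m e1) ee 0) 0.
    have y0 : (P *m (e1 - h)) ee 0 = 0.
      by move: u1 u2; rewrite p0 normr0 mulr0 oppr0 => u1 u2; apply/le_anti/andP.
    rewrite y0 mulr0; apply/andP; split; last by apply: mulr_ge0.
    by rewrite oppr_le0; apply: mulr_ge0.
  have kq := Kq ee pn.
  have low : `|(P *m e1) ee 0| - eps * `|(P *m gam) ee 0| <=
             `|(P *m e1) ee 0 + eps * (P *m gam) ee 0|.
    by have := lerB_normD ((P *m e1) ee 0) (eps * (P *m gam) ee 0); rewrite normrM gtr0_norm.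
  have low2 : (1 - eps * K) * `|(P *m e1) ee 0| <=
             `|(P *m e1) ee 0 + eps * (P *m gam) ee 0|.
    apply: le_trans low; have := ler_wpM2l (ltW ep) kq; lra.
  have hl := ler_wpM2l hlam low2.
  have m1 := ler_wpM2l (x := 1 - eps * K) ltac:(lra) u2.
  have m2 := ler_wpM2l (x := 1 - eps * K) ltac:(lra) u1.
  apply/andP; split; nra.
have [_ opt] := hopt eps (ltac:(apply/andP; split => //)).
have := opt _ hf; rewrite !costDZ.
have cb := cost_ge0 b; have cw := cost_ge0 w.
have := ler_wpM2r cw (ltW epe0).
have := mulr_ge0 (mulr_ge0 (ltW ep) (ltW ep)) cb.
nra.
Qed.

Lemma real_fin (fj fk aj ak ls : R) :
  (if 0 <= fk * fj then aj * - fk - ak * - fj = 0 else aj * - fk + ak * - fj = 0) ->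
  ls * aj != 0 -> ls * ak != 0 ->
  `|fj| / (ls * aj) = `|fk| / (ls * ak).
Proof.
move=> hs hj hk; apply/eqP; rewrite eqr_div //; apply/eqP.
have ajn : aj != 0 by apply: contraNneq hj => ->; rewrite mulr0.
have akn : ak != 0 by apply: contraNneq hk => ->; rewrite mulr0.
have ajq : 0 < aj * aj by rewrite -expr2 exprn_even_gt0.
have akq : 0 < ak * ak by rewrite -expr2 exprn_even_gt0.
case: ifP hs => hs h.
  have e : aj * fk = ak * fj by lra.
  have [h1|h1] := leP 0 fj; have [h2|h2] := leP 0 fk.
  - rewrite !ger0_norm //.
    have -> : fk * (ls * aj) = ls * (aj * fk) by ring.
    rewrite e; ring.
  - have fj0 : fj = 0 by nra.
    have : aj * fk = 0 by rewrite e fj0 mulr0.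
    by move/eqP; rewrite mulf_eq0 (negbTE ajn) /= => /eqP fk0; lra.
  - have fk0 : fk = 0 by nra.
    have : ak * fj = 0 by rewrite -e fk0 mulr0.
    by move/eqP; rewrite mulf_eq0 (negbTE akn) /= => /eqP fk1; lra.
  - rewrite !ltr0_norm //.
    have -> : - fk * (ls * aj) = - ls * (aj * fk) by ring.
    rewrite e; ring.
have e : aj * fk = - (ak * fj) by lra.
have hs' : fk * fj < 0 by rewrite ltNge hs.
have [h1|h1] := leP 0 fj; have [h2|h2] := leP 0 fk.
- nra.
- rewrite ger0_norm // ltr0_norm //.
  have -> : - fk * (ls * aj) = - ls * (aj * fk) by ring.
  rewrite e; ring.
- rewrite ltr0_norm // ger0_norm //.
  have -> : fk * (ls * aj) = ls * (aj * fk) by ring.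
  rewrite e; ring.
- nra.
Qed.

Lemma quad_form (u w : 'rV[R]_n) (x y : 'cV[R]_n) :
  (x^T *m (u^T *m w) *m y) 0 0 = (u *m x) 0 0 * (w *m y) 0 0.
Proof.
rewrite !mulmxA -trmx_mul -mulmxA.
move: (u *m x) (w *m y) => X Y.
by rewrite mxE big_ord1 mxE.
Qed.

Lemma rowmul0 (V : 'M[R]_(m, n)) (x : 'cV[R]_n) j :
  (row j V *m x) 0 0 = (V *m x) j 0.
Proof. by rewrite -row_mul mxE. Qed.

Lemma skew0 (M : 'M[R]_n) (x : 'cV[R]_n) : M^T = - M -> (x^T *m M *m x) 0 0 = 0.
Proof.
move=> skew.
have : (x^T *m M *m x)^T = - (x^T *m M *m x).
  by rewrite !trmx_mul trmxK skew mulNmx mulmxN mulmxA.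
move/(congr1 (fun X : 'M_1 => X 0 0)); rewrite mxE [RHS]mxE => h.
by apply/eqP; rewrite -[_ == 0](@mulrn_eq0 _ _ 2) mulr2n {2}h subrr.
Qed.

Lemma key_alg (V V' : 'M[R]_(m,n)) (A : 'M[R]_n) (d : 'cV[R]_n) (ls : R) (j k : 'I_m) :
  let f := V' *m (d - A *m d) in
  let Q := if 0 <= f k 0 * f j 0 then (row j V)^T *m row k V' - (row k V)^T *m row j V'
           else (row j V)^T *m row k V' + (row k V)^T *m row j V' in
  let M := Q *m (A - 1%:M) in
  M^T = - M -> (ls *: (V *m d)) j 0 != 0 -> (ls *: (V *m d)) k 0 != 0 ->
  `|f j 0| / (ls *: (V *m d)) j 0 = `|f k 0| / (ls *: (V *m d)) k 0.
Proof.
move=> f Q M skew.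
have s0 := @skew0 M d skew.
have ey : (A - 1%:M) *m d = - (d - A *m d).
  by rewrite mulmxBl mul1mx opprB.
have Hy : forall w : 'rV[R]_n, (w *m ((A - 1%:M) *m d)) 0 0 = - (w *m (d - A *m d)) 0 0.
  by move=> w; rewrite ey mulmxN mxE.
have HD : forall X Y : 'M[R]_1, (X + Y) 0 0 = X 0 0 + Y 0 0 by move=> X Y; rewrite !mxE.
have HB : forall X Y : 'M[R]_1, (X - Y) 0 0 = X 0 0 - Y 0 0 by move=> X Y; rewrite !mxE.
have HZ : forall (X : 'cV[R]_m) i, (ls *: X) i 0 = ls * X i 0 by move=> X i; rewrite !mxE.
rewrite !HZ.
move: s0; rewrite /M mulmxA -[d^T *m Q *m (A - 1%:M) *m d]mulmxA /Q.
set aj := (V *m d) j 0; set ak := (V *m d) k 0.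
have Ej : forall (w : 'rV[R]_n), (w *m (d - A *m d)) 0 0 = (w *m (d - A *m d)) 0 0 by [].
case: ifP => hs.
  rewrite mulmxBr mulmxBl HB !quad_form !Hy !rowmul0 -/f -/aj -/ak => s0 hj hk.
  by apply: real_fin => //; rewrite hs.
rewrite mulmxDr mulmxDl HD !quad_form !Hy !rowmul0 -/f -/aj -/ak => s0 hj hk.
by apply: real_fin => //; rewrite hs.
Qed.


Lemma gstar_eq (lam : R) (d g : 'cV[R]_n) :
  opf_optimal src dst lam d g -> gstar src dst lam d = g.
Proof.
move=> og; rewrite /gstar; case: pselect => [H|H]; last by exfalso; apply: H; exists g.
exact: (@opt_unique _ _ _ _ (projT2 (cid H)) og).
Qed.

End Ex.
End Helpers.
Import Helpers.

Theorem mainTheorem12 (R : realType) (n m : nat) (hn : (0 < n)%N)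
    (src dst : 'I_m -> 'I_n) (lam lamstar : R) (I1 I2 : {set 'I_m})
    (E' : {set 'I_m}) (j k : 'I_m) (gam : 'cV[R]_n) :
  simple_graph src dst ->
  connected_on src dst setT ->
  0 < lam < 1 -> lam <= lamstar ->
  connected_on src dst E' ->
  j \in E' -> k \in E' ->
  in_GammaA src dst lam (Ordinal hn) (Amat src dst lam I1 I2) gam ->
  exists eps0 : R, 0 < eps0 /\
    forall eps : R, 0 <= eps <= eps0 ->
      let d := unitv R (Ordinal hn) + eps *: gam in
      let M := Qmat src dst lam E' d j k *m (Amat src dst lam I1 I2 - 1%:M) in
      M^T = - M ->
      limits src dst lamstar d j 0 != 0 ->
      limits src dst lamstar d k 0 != 0 ->
      psi src dst lam lamstar E' d j = psi src dst lam lamstar E' d k.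
Proof.
move=> _ _ /andP[hl0 hl1] hls _ _ _ [[_ [gnn _]] [e0 [he0 hG]]].
set A := Amat src dst lam I1 I2.
set e1 := unitv R (Ordinal hn).
have he1 : forall i, 0 <= e1 i 0 by move=> i; rewrite /e1 /unitv mxE ler0n.
have hopt : forall eps, 0 < eps < e0 ->
    opf_optimal src dst lam (e1 + eps *: gam) (A *m e1 + eps *: (A *m gam)).
  move=> eps heps.
  have dnn : forall i, 0 <= (e1 + eps *: gam) i 0.
    move=> i; rewrite !mxE; apply: addr_ge0; first by have := he1 i; rewrite /e1 /unitv mxE.
    apply: mulr_ge0; [case/andP: heps => /ltW //| exact: gnn].
  have [g og] := @opt_exists R n m src dst lam _ (ltW hl0) dnn.
  by rewrite scalemxAr -mulmxDr -(hG eps heps) (@gstar_eq R n m src dst _ _ _ og).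
have o0 := @opt_limit R n m src dst _ _ _ _ _ _ (ltW hl0) he0 he1 gnn hopt.
exists (e0 / 2); split; first lra.
move=> eps /andP[ep0 epe] d M skew lj lk.
have gd : gstar src dst lam d = A *m d.
  have [e00|enz] := eqVneq eps 0.
    by rewrite /d e00 scale0r addr0; apply: gstar_eq.
  apply: hG; apply/andP; split; last lra.
  by rewrite lt_neqAle eq_sym enz.
move: skew lj lk; rewrite /M /Qmat /psi /flow /limits gd => skew lj lk.
exact: (@key_alg R n m (PTDF R src dst) (PTDF_on R src dst E') A d lamstar j k skew lj lk).
Qed.
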